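(* Let $N\ge 1$, $c\in\mathbb{R}$, and consider the manifold of Jacobi parameters $a_1,\dots,a_{N-1}>0$, $b_1,\dots,b_N\in\mathbb{R}$ with $\sum_{j=1}^N b_j=c$, with the Poisson bracket described in the context. Let $P_n$ and $Q_n$ be the first and second kind monic polynomials defined in the context. Then for every $n=1,\dots,N$ and all $x,y$, \[ \{P_n(x),P_n(y)\}=\{Q_n(x),Q_n(y)\}=0, \] \[ 2\{P_n(x),Q_n(y)\} = -\frac{P_n(x)Q_n(y)-P_n(y)Q_n(x)}{x-y} + Q_n(x)Q_n(y). \]
   Context: The Poisson bracket on functions of $(a_1,\dots,a_{N-1},b_1,\dots,b_N)$ is the bilinear antisymmetric bracket satisfying the Leibniz rule whose only nonzero brackets among the coordinates are $\{b_k,a_k\}=-\tfrac14 a_k$ for $k=1,\dots,N-1$ and $\{b_k,a_{k-1}\}=\tfrac14 a_{k-1}$ for $k=2,\dots,N$. Brackets of functions depending on auxiliary variables $x,y$ are computed with $x,y$ held fixed. For $b_1,\dots,b_m$ and $a_1,\dots,a_{m-1}$ let $J(b_1,\dots,b_m;a_1,\dots,a_{m-1})$ be the $m\times m$ tridiagonal symmetric matrix with diagonal $b_1,\dots,b_m$ and off-diagonal entries $a_1,\dots,a_{m-1}$. Then $P_n(x)=\det\bigl(x-J(b_1,\dots,b_n;a_1,\dots,a_{n-1})\bigr)$ and $Q_n(x)=\det\bigl(x-J(b_2,\dots,b_n;a_2,\dots,a_{n-1})\bigr)$ (so $Q_1=1$). *)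

(* Defs.v *)
From HB Require Import structures.
From mathcomp Require Import all_boot all_order all_algebra.
From mathcomp Require Import mpoly.
Set Implicit Arguments. Unset Strict Implicit. Unset Printing Implicit Defensive.
Import Order.TTheory GRing.Theory Num.Theory.
Local Open Scope ring_scope.

Section Jacobi.
Variables (R : realFieldType) (N : nat).

(* Coordinates: a_1..a_{N-1}, b_1..b_N, stored as the variables of
   {mpoly R[N.-1 + N]}: a_k is variable k-1, b_k is variable N-1+(k-1). *)
Definition nvars := (N.-1 + N)%N.
Notation MP := {mpoly R[nvars]}.

Definition var (j : nat) : MP :=
  if insub j is Some i then 'X_i else 0.
Definition dvar (j : nat) (f : MP) : MP :=
  if insub j is Some i then mderiv i f else 0.

Definition aidx (k : nat) : nat := k.-1.
Definition bidx (k : nat) : nat := (N.-1 + k.-1)%N.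

Definition avar (k : nat) : MP := if (0 < k < N)%N then var (aidx k) else 0.
Definition bvar (k : nat) : MP := if (0 < k <= N)%N then var (bidx k) else 0.

Definition da (k : nat) (f : MP) : MP := if (0 < k < N)%N then dvar (aidx k) f else 0.
Definition db (k : nat) (f : MP) : MP := if (0 < k <= N)%N then dvar (bidx k) f else 0.

(* The Poisson bracket: the unique antisymmetric biderivation with
   {b_k,a_k} = -1/4 a_k (1<=k<=N-1), {b_k,a_{k-1}} = 1/4 a_{k-1} (2<=k<=N),
   all other brackets of coordinates being 0:
   {f,g} = sum_{u,v coords} d_u f d_v g {u,v}. *)
Definition pbracket (f g : MP) : MP :=
  \sum_(1 <= k < N) (- (4%:R)^-1)%:MP * avar k *
      (db k f * da k g - da k f * db k g)
  + \sum_(2 <= k < N.+1) ((4%:R)^-1)%:MP * avar k.-1 *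
      (db k f * da k.-1 g - da k.-1 f * db k g).

Definition jac (s m : nat) : 'M[MP]_m :=
  \matrix_(i < m, j < m)
    if i == j :> nat then bvar (s + i).+1
    else if (i.+1 == j) || (j.+1 == i) then avar (s + minn i j).+1
    else 0.

Definition Ppoly (n : nat) (x : R) : MP := \det ((x%:MP)%:M - jac 0 n).
Definition Qpoly (n : nat) (x : R) : MP := \det ((x%:MP)%:M - jac 1 n.-1).

Definition on_manifold (c : R) (z : 'I_nvars -> R) : Prop :=
  (forall k, (0 < k < N)%N -> 0 < (avar k).@[z]) /\
  \sum_(1 <= j < N.+1) (bvar j).@[z] = c.

End Jacobi.

(* Main.v *)
Require Import Defs.
From HB Require Import structures.
From mathcomp Require Import all_boot all_order all_algebra.
From mathcomp Require Import mpoly.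
From mathcomp Require Import ring lra zify.
Set Implicit Arguments. Unset Strict Implicit. Unset Printing Implicit Defensive.
Import Order.TTheory GRing.Theory Num.Theory.
Local Open Scope ring_scope.

Section Infra.
Variables (R : realFieldType) (N : nat).
Local Notation MP := {mpoly R[nvars N]}.
Local Notation a := (avar R N).
Local Notation b := (bvar R N).

Lemma dvar_var i j : dvar i (var R N j) = ((i == j) && (i < nvars N)%N)%:R :> MP.
Proof.
rewrite /dvar /var; case: (@insubP _ _ (ordinal (nvars N)) i) => [i' hi ei|hi]; case: (@insubP _ _ (ordinal (nvars N)) j) => [j' hj ej|hj] /=.
- rewrite mderivX mnm1E; have [e|ne] := eqVneq j' i'.
  + rewrite e.
    have -> : (U_(i') - U_(i'))%MM = 0%MM by apply/mnmP => k; rewrite mnmBE subnn mnm0E.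
    by rewrite mpolyX0 scale1r -ei -ej e eqxx ltn_ord.
  + rewrite scale0r; case: eqP => // e'; case/eqP: ne; apply: val_inj; by rewrite ei ej.
- rewrite mderiv0; case: eqP => // e; move: hj; by rewrite -e hi.
- by rewrite (negbTE hi) andbF.
- by rewrite (negbTE hi) andbF.
Qed.

Lemma dvarD i (f g : MP) : dvar i (f + g) = dvar i f + dvar i g.
Proof. rewrite /dvar; case: insubP => *; by rewrite ?mderivD ?addr0. Qed.
Lemma dvarN i (f : MP) : dvar i (- f) = - dvar i f.
Proof. rewrite /dvar; case: insubP => *; by rewrite ?mderivN ?oppr0. Qed.
Lemma dvarM i (f g : MP) : dvar i (f * g) = dvar i f * g + f * dvar i g.
Proof. rewrite /dvar; case: insubP => *; by rewrite ?mderivM ?mul0r ?mulr0 ?addr0. Qed.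
Lemma dvarC i c : dvar i (c%:MP : MP) = 0.
Proof. rewrite /dvar; case: insubP => *; by rewrite ?mderivC. Qed.

Lemma daD k (f g : MP) : da k (f + g) = da k f + da k g.
Proof. rewrite /da; case: ifP => _; by rewrite ?dvarD ?addr0. Qed.
Lemma daN k (f : MP) : da k (- f) = - da k f.
Proof. rewrite /da; case: ifP => _; by rewrite ?dvarN ?oppr0. Qed.
Lemma daM k (f g : MP) : da k (f * g) = da k f * g + f * da k g.
Proof. rewrite /da; case: ifP => _; by rewrite ?dvarM ?mul0r ?mulr0 ?addr0. Qed.
Lemma daC k c : da k (c%:MP : MP) = 0.
Proof. rewrite /da; case: ifP => _; by rewrite ?dvarC. Qed.
Lemma dbD k (f g : MP) : db k (f + g) = db k f + db k g.
Proof. rewrite /db; case: ifP => _; by rewrite ?dvarD ?addr0. Qed.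
Lemma dbN k (f : MP) : db k (- f) = - db k f.
Proof. rewrite /db; case: ifP => _; by rewrite ?dvarN ?oppr0. Qed.
Lemma dbM k (f g : MP) : db k (f * g) = db k f * g + f * db k g.
Proof. rewrite /db; case: ifP => _; by rewrite ?dvarM ?mul0r ?mulr0 ?addr0. Qed.
Lemma dbC k c : db k (c%:MP : MP) = 0.
Proof. rewrite /db; case: ifP => _; by rewrite ?dvarC. Qed.

Lemma a_out k : ~~ (0 < k < N)%N -> a k = 0.
Proof. by rewrite /avar => /negbTE ->. Qed.
Lemma b_out k : ~~ (0 < k <= N)%N -> b k = 0.
Proof. by rewrite /bvar => /negbTE ->. Qed.

Lemma dvar0 i : dvar i (0 : MP) = 0.
Proof. by rewrite -mpolyC0 dvarC. Qed.

Lemma da_a k j : da k (a j) = ((k == j) && (0 < k < N)%N)%:R.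
Proof.
rewrite /da /avar; case hk: (0 < k < N)%N; case hj: (0 < j < N)%N; rewrite ?dvar0 ?andbF ?andbT //.
- rewrite dvar_var /aidx /nvars (_ : (k.-1 < N.-1 + N)%N = true); last by lia.
  rewrite andbT; have -> : (k.-1 == j.-1) = (k == j) by apply/idP/idP => /eqP e; apply/eqP; lia.
  by [].
- case: eqP => // e; by rewrite -e hk in hj.
Qed.

Lemma db_b k j : db k (b j) = ((k == j) && (0 < k <= N)%N)%:R.
Proof.
rewrite /db /bvar; case hk: (0 < k <= N)%N; case hj: (0 < j <= N)%N; rewrite ?dvar0 ?andbF ?andbT //.
- rewrite dvar_var /bidx /nvars (_ : (N.-1 + k.-1 < N.-1 + N)%N = true); last by lia.
  rewrite andbT; have -> : (N.-1 + k.-1 == N.-1 + j.-1)%N = (k == j) by apply/idP/idP => /eqP e; apply/eqP; lia.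
  by [].
- case: eqP => // e; by rewrite -e hk in hj.
Qed.

Lemma da_b k j : da k (b j) = 0.
Proof.
rewrite /da /bvar; case hk: (0 < k < N)%N; case hj: (0 < j <= N)%N; rewrite ?dvar0 //.
rewrite dvar_var /aidx /bidx; case: eqP => //= e; lia.
Qed.

Lemma db_a k j : db k (a j) = 0.
Proof.
rewrite /db /avar; case hk: (0 < k <= N)%N; case hj: (0 < j < N)%N; rewrite ?dvar0 //.
rewrite dvar_var /aidx /bidx; case: eqP => //= e; lia.
Qed.


Lemma sum_delta (m n j : nat) (G : nat -> MP) :
  \sum_(m <= i < n) (if i == j then G i else 0) = if (m <= j < n)%N then G j else 0.
Proof.
elim: n => [|n IH]; first by rewrite big_geq //; case: ifP => //; lia.
case: (leqP m n) => hmn.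
- rewrite big_nat_recr //= IH; case: eqP => [<-|ne].
  + case: ifP => h1; case: ifP => h2; rewrite ?addr0 ?add0r //; lia.
  + case: ifP => h1; case: ifP => h2; rewrite ?addr0 ?add0r //; lia.
- rewrite big_geq //; case: ifP => //; lia.
Qed.

Definition pb := @pbracket R N.

Lemma pbDl (f g h : MP) : pb (f + g) h = pb f h + pb g h.
Proof.
rewrite /pb /pbracket addrACA -!big_split /=; congr (_ + _); apply: eq_bigr => k _;
  rewrite !daD !dbD; ring.
Qed.
Lemma pbNl (f h : MP) : pb (- f) h = - pb f h.
Proof.
rewrite /pb /pbracket opprD -!sumrN; congr (_ + _); apply: eq_bigr => k _;
  rewrite !daN !dbN; ring.
Qed.
Lemma pbMl (f g h : MP) : pb (f * g) h = f * pb g h + g * pb f h.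
Proof.
rewrite /pb /pbracket !mulrDr !mulr_sumr addrACA -!big_split /=; congr (_ + _); apply: eq_bigr => k _;
  rewrite !daM !dbM; ring.
Qed.
Lemma pbCl c (h : MP) : pb c%:MP h = 0.
Proof.
rewrite /pb /pbracket !big1 ?addr0 // => k _; rewrite !daC !dbC; ring.
Qed.
Lemma pb_anti (f g : MP) : pb g f = - pb f g.
Proof.
rewrite /pb /pbracket opprD -!sumrN; congr (_ + _); apply: eq_bigr => k _; ring.
Qed.


Local Notation q4 := (((4%:R : R)^-1)%:MP : MP).

Lemma four_q : (4%:R : MP) * q4 = 1.
Proof.
by rewrite -(mpolyC_nat _ R 4) -mpolyCM mulfV ?mpolyC1 // pnatr_eq0.
Qed.

Lemma pb_b j g : pb (b j) g = q4 * (a j.-1 * da j.-1 g - a j * da j g).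
Proof.
rewrite /pb /pbracket.
transitivity (\sum_(1 <= k < N) (if k == j then - q4 * a j * da j g else 0)
  + \sum_(2 <= k < N.+1) (if k == j then q4 * a j.-1 * da j.-1 g else 0)).
  congr (_ + _); apply: eq_big_nat => k hk; rewrite !da_b !db_b;
  case: (k =P j) => [<-|ne] /=.
  - rewrite (_ : (0 < k <= N)%N = true); last lia. rewrite /=. ring.
  - ring.
  - rewrite (_ : (0 < k <= N)%N = true); last lia. rewrite /=. ring.
  - ring.
rewrite !sum_delta; case: ifP => h1; case: ifP => h2.
- ring.
- have h4 : a j.-1 = 0 by apply: a_out; lia.
  rewrite h4; ring.
- have h3 : a j = 0 by apply: a_out; lia.
  rewrite h3; ring.
- have h3 : a j = 0 by apply: a_out; lia.
  have h4 : a j.-1 = 0 by apply: a_out; lia.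
  rewrite h3 h4; ring.
Qed.

Lemma pb_a j g : pb (a j) g = q4 * (a j * (db j g - db j.+1 g)).
Proof.
rewrite /pb /pbracket.
transitivity (\sum_(1 <= k < N) (if k == j then q4 * a j * db j g else 0)
  + \sum_(2 <= k < N.+1) (if k == j.+1 then - q4 * a j * db j.+1 g else 0)).
  congr (_ + _); apply: eq_big_nat => k hk; rewrite !da_a !db_a.
  - case: (k =P j) => [<-|ne] /=.
    + rewrite (_ : (0 < k < N)%N = true); last lia. rewrite /=. ring.
    + ring.
  - have -> : (k.-1 == j) = (k == j.+1) by apply/idP/idP => /eqP e; apply/eqP; lia.
    case: (k =P j.+1) hk => [->|ne] hk /=.
    + rewrite (_ : (0 < j < N)%N = true); last lia. rewrite /=. ring.
    + ring.
rewrite !sum_delta; case: ifP => h1.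
- ring.
- have h3 : a j = 0 by apply: a_out; lia.
  rewrite h3; ring.
Qed.

Definition Bk (f g : MP) : MP := 4%:R * pb f g.

Lemma Bk_b j g : Bk (b j) g = a j.-1 * da j.-1 g - a j * da j g.
Proof. by rewrite /Bk pb_b mulrA four_q mul1r. Qed.
Lemma Bk_a j g : Bk (a j) g = a j * (db j g - db j.+1 g).
Proof. by rewrite /Bk pb_a mulrA four_q mul1r. Qed.

Lemma BkDl (f g h : MP) : Bk (f + g) h = Bk f h + Bk g h.
Proof. by rewrite /Bk pbDl mulrDr. Qed.
Lemma BkNl (f h : MP) : Bk (- f) h = - Bk f h.
Proof. by rewrite /Bk pbNl mulrN. Qed.
Lemma BkMl (f g h : MP) : Bk (f * g) h = f * Bk g h + g * Bk f h.
Proof. rewrite /Bk pbMl; ring. Qed.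
Lemma BkCl c (h : MP) : Bk c%:MP h = 0.
Proof. by rewrite /Bk pbCl mulr0. Qed.
Lemma Bk_anti (f g : MP) : Bk g f = - Bk f g.
Proof. by rewrite /Bk pb_anti mulrN. Qed.
Lemma BkDr (f g h : MP) : Bk h (f + g) = Bk h f + Bk h g.
Proof. by rewrite Bk_anti BkDl opprD -!Bk_anti. Qed.
Lemma BkNr (f h : MP) : Bk h (- f) = - Bk h f.
Proof. by rewrite Bk_anti BkNl opprK -Bk_anti. Qed.
Lemma BkMr (f g h : MP) : Bk h (f * g) = f * Bk h g + g * Bk h f.
Proof. rewrite Bk_anti BkMl (Bk_anti g h) (Bk_anti f h); ring. Qed.
Lemma BkCr c (h : MP) : Bk h c%:MP = 0.
Proof. by rewrite Bk_anti BkCl oppr0. Qed.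


Lemma Bk1l (h : MP) : Bk 1 h = 0. Proof. by rewrite -mpolyC1 BkCl. Qed.
Lemma Bk1r (h : MP) : Bk h 1 = 0. Proof. by rewrite -mpolyC1 BkCr. Qed.
Lemma Bk0l (h : MP) : Bk 0 h = 0. Proof. by rewrite -mpolyC0 BkCl. Qed.
Lemma Bk0r (h : MP) : Bk h 0 = 0. Proof. by rewrite -mpolyC0 BkCr. Qed.

Lemma Bk_bb i j : Bk (b i) (b j) = 0.
Proof. rewrite Bk_b !da_b; ring. Qed.
Lemma Bk_aa i j : Bk (a i) (a j) = 0.
Proof. rewrite Bk_a !db_a; ring. Qed.
Lemma Bk_ba n : Bk (b n.+1) (a n) = a n.
Proof.
rewrite Bk_b !da_a /= eqxx (_ : (n.+1 == n) = false) /=; last by apply/eqP; lia.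
case h: (0 < n < N)%N; first by rewrite /=; ring.
rewrite a_out ?h //; ring.
Qed.

Fixpoint wseq (u0 u1 : R -> MP) (n : nat) (t : R) {struct n} : MP :=
  match n with
  | 0 => u0 t
  | 1 => u1 t
  | S ((S m) as m1) => (t%:MP - b m1.+1) * wseq u0 u1 m1 t - a m1 ^+ 2 * wseq u0 u1 m t
  end.

Lemma wseqSS u0 u1 m t : wseq u0 u1 m.+2 t =
  (t%:MP - b m.+2) * wseq u0 u1 m.+1 t - a m.+1 ^+ 2 * wseq u0 u1 m t.
Proof. by []. Qed.

Definition wgood (w : nat -> R -> MP) k := forall t,
  (forall j, (k <= j)%N -> da j (w k t) = 0) /\
  (forall j, (k < j)%N -> db j (w k t) = 0) /\
  ((0 < k <= N)%N -> db k (w k t) = - w k.-1 t).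

Lemma wseq_good u0 u1 : wgood (wseq u0 u1) 0 -> wgood (wseq u0 u1) 1 ->
  forall k, wgood (wseq u0 u1) k.
Proof.
move=> g0 g1; suff H : forall k, wgood (wseq u0 u1) k /\ wgood (wseq u0 u1) k.+1.
  by move=> k; case: (H k).
elim=> [|k [IH0 IH1]]; first by split.
split => // t; have [A0 [B0 C0]] := IH0 t; have [A1 [B1 C1]] := IH1 t.
split; [|split].
- move=> j hj; rewrite wseqSS expr2 !(daD, daN, daM, daC, da_b, da_a) (A1 j) ?(A0 j); try lia.
  rewrite (_ : (j == k.+1) = false) /=; last by apply/eqP; lia.
  ring.
- move=> j hj; rewrite wseqSS expr2 !(dbD, dbN, dbM, dbC, db_b, db_a) (B1 j) ?(B0 j); try lia.
  rewrite (_ : (j == k.+2) = false) /=; last by apply/eqP; lia.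
  ring.
- move=> hk; rewrite wseqSS expr2 !(dbD, dbN, dbM, dbC, db_b, db_a) (B1 k.+2) ?(B0 k.+2); try lia.
  rewrite eqxx hk /=; ring.
Qed.

Section Loc.
Variables (w : nat -> R -> MP) (gw : forall k, wgood w k).

Lemma L1 k n t : (k <= n)%N -> Bk (b n.+1) (w k t) = 0.
Proof.
move=> h; have [A0 _] := gw k t.
rewrite Bk_b /= (A0 n) ?(A0 n.+1) //; try lia. ring.
Qed.

Lemma L2 k n t : (k < n)%N -> Bk (a n) (w k t) = 0.
Proof.
move=> h; have [_ [B0 _]] := gw k t.
rewrite Bk_a (B0 n) ?(B0 n.+1) //; try lia. ring.
Qed.

Lemma L3 n t : (0 < n)%N -> Bk (a n) (w n t) = - a n * w n.-1 t.
Proof.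
move=> h; have [_ [B0 C0]] := gw n t.
rewrite Bk_a (B0 n.+1) //.
case: (ltnP n N) => hn.
- rewrite C0; [ring | lia].
- rewrite a_out; [ring | lia].
Qed.
End Loc.


Ltac bkexp := rewrite ?expr2 !(BkDl, BkDr, BkNl, BkNr, BkMl, BkMr, BkCl, BkCr, Bk1l, Bk1r, Bk0l, Bk0r).

Section Step.
Variables (u v : nat -> R -> MP) (gu : forall k, wgood u k) (gv : forall k, wgood v k).
Variables (u0 u1 v0 v1 : R -> MP).
Hypotheses (hu : u = wseq u0 u1) (hv : v = wseq v0 v1).
Variables (x y : R) (m : nat).
Local Notation dxy := (x%:MP - y%:MP : MP).
Local Notation A := (a m.+1).
Local Notation B := (b m.+2).

Lemma S1m e1 e2 :
  dxy * Bk (u m.+1 x) (v m.+1 y) = e1 ->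
  dxy * Bk (u m x) (v m.+1 y) = e2 ->
  dxy * Bk (u m.+2 x) (v m.+1 y) =
    (x%:MP - B) * e1 + 2%:R * dxy * A ^+ 2 * u m x * v m y - A ^+ 2 * e2.
Proof.
move=> <- <-.
rewrite {1}hu wseqSS -hu.
rewrite ?expr2 !(BkDl, BkNl, BkMl, BkCl).
rewrite (L1 gv) // (L3 gv) //=.
ring.
Qed.

Lemma S2m e1 e2 e3 e4 :
  dxy * Bk (u m.+1 x) (v m.+1 y) = e1 ->
  dxy * Bk (u m x) (v m.+1 y) = e2 ->
  dxy * Bk (u m.+1 x) (v m y) = e3 ->
  dxy * Bk (u m x) (v m y) = e4 ->
  dxy * Bk (u m.+2 x) (v m.+2 y) =
    (y%:MP - B) * ((x%:MP - B) * e1 + 2%:R * dxy * A ^+ 2 * u m x * v m y - A ^+ 2 * e2)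
    - 2%:R * dxy * A ^+ 2 * u m x * v m.+1 y
    - A ^+ 2 * ((x%:MP - B) * e3 - A ^+ 2 * e4)
    - 2%:R * dxy * A ^+ 2 * v m y * ((x%:MP - B) * u m x - u m.+1 x).
Proof.
move=> <- <- <- <-.
rewrite {1}hu {1}hv !wseqSS -hu -hv.
rewrite ?expr2 !(BkDl, BkNl, BkMl, BkCl, BkDr, BkNr, BkMr, BkCr).
rewrite (Bk_anti B (u m.+1 x)) (Bk_anti A (u m.+1 x)) (Bk_anti B (u m x)) (Bk_anti A (u m x)).
rewrite ?(L1 gv) ?(L1 gu) ?(L3 gv) ?(L3 gu) ?(L2 gv) ?(L2 gu) //=.
rewrite ?Bk_bb ?Bk_aa.
rewrite ?(Bk_anti (b m.+2) (a m.+1)) ?Bk_ba.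
ring.
Qed.
End Step.


Definition pw := wseq (fun _ => 1) (fun t => t%:MP - b 1).
Definition qw := wseq (fun _ => 0) (fun _ => 1).
Definition sw (i : bool) := if i then pw else qw.

Lemma pw_good (hN : (0 < N)%N) k : wgood pw k.
Proof.
apply: wseq_good => t /=; (split; [|split]).
- by move=> j _; rewrite -mpolyC1 daC.
- by move=> j _; rewrite -mpolyC1 dbC.
- by [].
- move=> j hj; rewrite daD daN daC da_b; ring.
- move=> j hj; rewrite dbD dbN dbC db_b (_ : (j == 1%N) = false) /=; last by apply/eqP; lia.
  ring.
- move=> _; rewrite dbD dbN dbC db_b /= hN /=; ring.
Qed.

Lemma qw_good k : wgood qw k.
Proof.
apply: wseq_good => t /=; (split; [|split]).
- by move=> j _; rewrite -mpolyC0 daC.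
- by move=> j _; rewrite -mpolyC0 dbC.
- by [].
- by move=> j _; rewrite -mpolyC1 daC.
- by move=> j _; rewrite -mpolyC1 dbC.
- by move=> _; rewrite -mpolyC1 dbC oppr0.
Qed.

Definition ES (i j : bool) n x y : MP :=
  let dxy := (x%:MP - y%:MP : MP) in
  match i, j with
  | true, true => 0
  | false, false => 0
  | true, false => 2%:R * (- (pw n x * qw n y) + qw n x * pw n y + dxy * qw n x * qw n y)
  | false, true => 2%:R * (- (pw n y * qw n x) + qw n y * pw n x - dxy * qw n y * qw n x)
  end.

Definition EM (i j : bool) n x y : MP :=
  let dxy := (x%:MP - y%:MP : MP) in
  match i, j with
  | true, true => 2%:R * (pw n x * pw n.-1 y - pw n.-1 x * pw n y - dxy * pw n.-1 x * pw n.-1 y)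
  | true, false => 2%:R * (qw n x * pw n.-1 y - pw n.-1 x * qw n y
                     + dxy * (qw n x * qw n.-1 y - pw n.-1 x * qw n.-1 y))
  | false, true => 2%:R * (pw n x * qw n.-1 y - qw n.-1 x * pw n y
                     - dxy * (qw n x * qw n.-1 y + qw n.-1 x * pw n.-1 y))
  | false, false => 2%:R * (qw n x * qw n.-1 y - qw n.-1 x * qw n y - dxy * qw n.-1 x * qw n.-1 y)
  end.

Definition Same n := forall i j x y,
  (x%:MP - y%:MP) * Bk (sw i n x) (sw j n y) = ES i j n x y.
Definition Mixed n := forall i j x y,
  (x%:MP - y%:MP) * Bk (sw i n x) (sw j n.-1 y) = EM i j n x y.

Lemma flip (f g e : MP) x y : (y%:MP - x%:MP) * Bk g f = e -> (x%:MP - y%:MP) * Bk f g = e.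
Proof. move=> <-; rewrite (Bk_anti f g); ring. Qed.

Lemma inv_all (hN : (0 < N)%N) m : Same m.+1 /\ Mixed m.+1 /\ Same m.
Proof.
have sg : forall i k, wgood (sw i) k by move=> [] k; [exact: pw_good | exact: qw_good].
have sw_w : forall i, exists u0 u1, sw i = wseq u0 u1 by move=> [] /=; do 2 eexists; reflexivity.
elim: m => [|m [S1 [M1 S0]]].
  split; [|split] => i j x y; case: i; case: j; rewrite /ES /EM /sw /pw /qw /=;
    bkexp; rewrite ?Bk_bb; ring.
split; [|split] => // i j x y.
- have [u0 [u1 hu]] := sw_w i; have [v0 [v1 hv]] := sw_w j.
  have h2 := flip (M1 j i y x).
  rewrite (S2m (sg i) (sg j) hu hv (S1 i j x y) h2 (M1 i j x y) (S0 i j x y)).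
  case: i {hu h2}; case: j {hv}; rewrite /ES /EM /sw /pw /qw ?wseqSS /=; ring.
- have [u0 [u1 hu]] := sw_w i; have [v0 [v1 hv]] := sw_w j.
  have h2 := flip (M1 j i y x).
  rewrite (S1m (sg j) hu (S1 i j x y) h2).
  case: i {hu h2}; case: j {hv}; rewrite /ES /EM /sw /pw /qw ?wseqSS /=; ring.
Qed.


Definition trid (d e : nat -> MP) m : 'M[MP]_m :=
  \matrix_(i < m, j < m)
    if i == j :> nat then d i
    else if (i.+1 == j) || (j.+1 == i) then e (minn i j) else 0.

Lemma lift_lt n (h : 'I_n.+1) (k : 'I_n) : (k < h)%N -> (lift h k : nat) = k.
Proof. by move=> hk; rewrite /= /bump leqNgt hk. Qed.
Lemma lift_ge n (h : 'I_n.+1) (k : 'I_n) : (h <= k)%N -> (lift h k : nat) = k.+1.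
Proof. by move=> hk; rewrite /= /bump hk. Qed.

Lemma trid_rec d e m :
  \det (trid d e m.+2) = d m.+1 * \det (trid d e m.+1) - e m ^+ 2 * \det (trid d e m).
Proof.
rewrite (expand_det_row _ ord_max) big_ord_recr /= big_ord_recr /= big1 ?add0r; last first.
  move=> i _; rewrite mxE /=; have hi := ltn_ord i.
  case: ifP => [/eqP|_]; first lia.
  case: ifP => [/orP [/eqP|/eqP]|_]; try lia.
  by rewrite mul0r.
rewrite !mxE /= eqxx.
rewrite (_ : (m.+1 == m)%N = false); last by apply/eqP; lia.
rewrite (_ : (m.+2 == m)%N = false) ?orbT /=; last by apply/eqP; lia.
rewrite (_ : minn m.+1 m = m); last by lia.
rewrite /cofactor. have -> : row' ord_max (col' ord_max (trid d e m.+2)) = trid d e m.+1.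
  apply/matrixP => i k; rewrite !mxE !lift_max //.
set M := row' ord_max (col' (widen_ord (leqnSn m.+1) ord_max) (trid d e m.+2)).
have -> : \det M = e m * \det (trid d e m).
  rewrite (expand_det_col _ ord_max) big_ord_recr /= big1 ?add0r; last first.
    move=> i _; rewrite !mxE lift_max (@lift_ge _ _ ord_max) //=; have hi := ltn_ord i.
    case: ifP => [/eqP|_]; first lia.
    case: ifP => [/orP [/eqP|/eqP]|_]; try lia.
    by rewrite mul0r.
  rewrite !mxE lift_max (@lift_ge _ _ ord_max) //=.
  rewrite (_ : (m == m.+1)%N = false); last by apply/eqP; lia.
  rewrite eqxx /= (_ : minn m m.+1 = m); last by lia.
  rewrite /cofactor (_ : row' ord_max (col' ord_max M) = trid d e m).
    have s3 : ((-1) ^+ (m + m) : MP) = 1 by rewrite -signr_odd addnn odd_double.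
    by rewrite /= s3 mul1r.
  apply/matrixP => i k.
  have hk : (m <= k)%N = false by have := ltn_ord k; lia.
  have hk1 : (m.+1 <= k)%N = false by have := ltn_ord k; lia.
  by rewrite !mxE !lift_max /= /bump ?hk1 ?add0n ?hk ?add0n.
have s1 : ((-1) ^+ (m.+1 + m.+1) : MP) = 1 by rewrite -signr_odd addnn odd_double.
have s2 : ((-1) ^+ (m.+1 + m) : MP) = -1 by rewrite -signr_odd addSn addnn /= odd_double.
rewrite /= s1 s2; ring.
Qed.


Lemma detP n x : \det (trid (fun i => x%:MP - b i.+1) (fun i => - a i.+1) n) = pw n x.
Proof.
suff H : forall k, \det (trid (fun i => x%:MP - b i.+1) (fun i => - a i.+1) k) = pw k x /\
   \det (trid (fun i => x%:MP - b i.+1) (fun i => - a i.+1) k.+1) = pw k.+1 x by case: (H n).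
elim=> [|k [IH0 IH1]].
  by rewrite det_mx00 det_mx11 !mxE.
split => //; rewrite trid_rec IH0 IH1 /pw wseqSS; ring.
Qed.

Lemma detQ n x : \det (trid (fun i => x%:MP - b i.+2) (fun i => - a i.+2) n) = qw n.+1 x.
Proof.
suff H : forall k, \det (trid (fun i => x%:MP - b i.+2) (fun i => - a i.+2) k) = qw k.+1 x /\
   \det (trid (fun i => x%:MP - b i.+2) (fun i => - a i.+2) k.+1) = qw k.+2 x by case: (H n).
elim=> [|k [IH0 IH1]].
  rewrite det_mx00 det_mx11 !mxE /qw /=; split => //; ring.
split => //; rewrite trid_rec IH0 IH1 /qw (wseqSS _ _ k.+1); ring.
Qed.

Lemma jacP s n x : (x%:MP)%:M - jac R N s n = trid (fun i => x%:MP - b (s + i).+1) (fun i => - a (s + i).+1) n.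
Proof.
apply/matrixP => i j; rewrite !mxE.
case: (i =P j) => [->|ne]; first by rewrite eqxx mulr1n.
have -> : (i == j :> nat) = false by apply/eqP => e; apply: ne; apply: val_inj.
rewrite mulr0n sub0r; case: ifP => _ //; by rewrite oppr0.
Qed.

Lemma PpolyE n x : Ppoly N n x = pw n x.
Proof. by rewrite /Ppoly jacP -(detP n x). Qed.

Lemma QpolyE n x : Qpoly N n.+1 x = qw n.+1 x.
Proof. by rewrite /Qpoly jacP -(detQ n x). Qed.

End Infra.

Unset Implicit Arguments.
Set Strict Implicit.

Theorem theorem2p4 (R : realFieldType) (N : nat) (c : R) (n : nat)
  (hN : (1 <= N)%N) (hn : (1 <= n <= N)%N)
  (z : 'I_(nvars N) -> R) (hz : on_manifold c z) (x y : R) :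
  (pbracket (Ppoly N n x) (Ppoly N n y)).@[z] = 0 /\
  (pbracket (Qpoly N n x) (Qpoly N n y)).@[z] = 0 /\
  (x != y ->
   2%:R * (pbracket (Ppoly N n x) (Qpoly N n y)).@[z] =
     - (((Ppoly N n x).@[z] * (Qpoly N n y).@[z]
          - (Ppoly N n y).@[z] * (Qpoly N n x).@[z]) / (x - y))
     + (Qpoly N n x).@[z] * (Qpoly N n y).@[z]).
Proof.
case: n hn => [|m] hn; first by [].
have [S1 _] := @inv_all R N hN m.
rewrite !PpolyE !QpolyE.
have self : forall f : {mpoly R[nvars N]}, (pbracket f f).@[z] = 0.
  move=> f; have h := congr1 (meval z) (pb_anti f f).
  rewrite /pb mevalN in h; lra.
have ev : forall (i j : bool) (v : R), (x%:MP - y%:MP) * Bk (sw N i m.+1 x) (sw N j m.+1 y) = ES N i j m.+1 x y ->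
   v = (pbracket (sw N i m.+1 x) (sw N j m.+1 y)).@[z] ->
   (x - y) * (4%:R * v) = (ES N i j m.+1 x y).@[z].
  move=> i j v h ->; rewrite -h /Bk /pb.
  by rewrite !(mevalM, mevalB, mevalC, mevalMn, meval1).
case: (eqVneq x y) => [<-|nxy].
  by split; [exact: self | split; [exact: self | by []]].
have hxy : x - y != 0 by rewrite subr_eq0.
split; [|split].
- have := ev true true _ (S1 true true x y) erefl.
  rewrite /ES meval0 => /eqP; rewrite !mulf_eq0 (negbTE hxy) pnatr_eq0 /= => /eqP //.
- have := ev false false _ (S1 false false x y) erefl.
  rewrite /ES meval0 => /eqP; rewrite !mulf_eq0 (negbTE hxy) pnatr_eq0 /= => /eqP //.
- move=> _; set V := (pbracket (pw N m.+1 x) (qw N m.+1 y)).@[z].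
  have := ev true false V (S1 true false x y) erefl.
  clearbody V.
  rewrite /ES /sw !(mevalM, mevalB, mevalD, mevalN, mevalC, mevalMn, meval1) => h.
  apply: (mulfI hxy).
  have -> : (x - y) * (2%:R * V) = ((x - y) * (4%:R * V)) / 2%:R.
    by field.
  by rewrite h; field.
Qed.
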